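(* Let $F$ be a real multilinear polynomial on $[-1,1]^n$, let $\eta>0$, and let $x\in[-1,1]^n$. Put $I=\{i: x_i\in\{-1,1\}\}$. Suppose that: - $x$ is feasible; - $G(x)=0$; - $\frac{\partial F}{\partial x_i}(x)\ne0$ for every $i\in I$. Then $x$ is a local minimum of $F$ in $[-1,1]^n$.
   Context: $\Pi_{[-1,1]^n}$ denotes the Euclidean projection onto $[-1,1]^n$, and $G(x)=\frac1\eta\big(x-\Pi_{[-1,1]^n}(x-\eta\nabla F(x))\big)$ is the gradient mapping. Feasibility: $x$ is feasible if the polynomial obtained from $F$ by fixing $x_i$ to its value for every $i\in I$ is constant. Local minimum in a set $\Delta$: $x$ is a local minimum of $F$ in $\Delta$ if there is $\delta>0$ such that $F(x)\le F(x')$ for all $x'\in\Delta$ with $\|x-x'\|_2^2\le\delta$. *)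

(* Defs.v *)
From HB Require Import structures.
From mathcomp Require Import all_boot all_order all_algebra.
From mathcomp Require Import mpoly.
Set Implicit Arguments. Unset Strict Implicit. Unset Printing Implicit Defensive.
Import Order.TTheory GRing.Theory Num.Theory.
Local Open Scope ring_scope.

Section Defs.
Variables (R : realFieldType) (n : nat).

Definition multilinear (F : {mpoly R[n]}) : Prop :=
  forall m, m \in msupp F -> forall i : 'I_n, (m i <= 1)%N.

Definition in_cube (x : 'I_n -> R) : Prop := forall i, -1 <= x i <= 1.

(* Euclidean projection onto [-1,1]^n (coordinatewise clamp) *)
Definition proj_cube (x : 'I_n -> R) : 'I_n -> R :=
  fun i => Num.min 1 (Num.max (-1) (x i)).

Definition partial (F : {mpoly R[n]}) (i : 'I_n) (x : 'I_n -> R) : R :=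
  (F^`M(i)).@[x].

Definition grad (F : {mpoly R[n]}) (x : 'I_n -> R) : 'I_n -> R :=
  fun i => partial F i x.

Definition grad_map (F : {mpoly R[n]}) (eta : R) (x : 'I_n -> R) : 'I_n -> R :=
  fun i => (x i - proj_cube (fun j => x j - eta * grad F x j) i) / eta.

Definition on_bd (x : 'I_n -> R) (i : 'I_n) : bool := (x i == 1) || (x i == -1).

Definition fix_bd (F : {mpoly R[n]}) (x : 'I_n -> R) : {mpoly R[n]} :=
  F \mPo [tuple if on_bd x i then (x i)%:MP else 'X_i | i < n].

Definition feasible (F : {mpoly R[n]}) (x : 'I_n -> R) : Prop :=
  exists c : R, fix_bd F x = c%:MP.

Definition sqdist (x y : 'I_n -> R) : R := \sum_(i < n) (x i - y i) ^+ 2.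

Definition local_min_in (F : {mpoly R[n]}) (Delta : ('I_n -> R) -> Prop)
  (x : 'I_n -> R) : Prop :=
  exists2 delta : R, 0 < delta &
    forall x', Delta x' -> sqdist x x' <= delta -> F.@[x] <= F.@[x'].

End Defs.

(* Main.v *)
Require Import Defs.
From HB Require Import structures.
From mathcomp Require Import all_boot all_order all_algebra.
From mathcomp Require Import mpoly.
From mathcomp Require Import ring lra.
Import Order.TTheory GRing.Theory Num.Theory.
Set Implicit Arguments. Unset Strict Implicit.
Local Open Scope ring_scope.
Lemma sq_le (R : realFieldType) (a e : R) : 0 < e -> a^+2 <= e^+2 -> `|a| <= e.
Proof.
move=> h1 h2; rewrite leNgt; apply/negP => h3.
have h4 : 0 <= `|a| by [].
have : e ^+ 2 < `|a| ^+ 2 by rewrite !expr2; nra.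
by rewrite real_normK ?num_real // ltNge h2.
Qed.

Lemma prod_step (R : realFieldType) (A B a b : R) :
  `|A| <= 1 -> `|B| <= 1 -> `|a| <= 1 -> `|b| <= 1 ->
  `|A * a - B * b| <= `|A - B| + `|a - b|.
Proof.
move=> hA hB ha hb.
have -> : A * a - B * b = (A - B) * a + B * (a - b) by ring.
apply: (le_trans (ler_normD _ _)); rewrite !normrM.
apply: lerD.
  by rewrite -[X in _ <= X]mulr1 ler_wpM2l.
by rewrite -[X in _ <= X]mul1r ler_wpM2r.
Qed.

Lemma pow_step (R : realFieldType) (a b e : R) k :
  `|a| <= 1 -> `|b| <= 1 -> `|a - b| <= e ->
  [/\ `|a ^+ k| <= 1, `|b ^+ k| <= 1 & `|a ^+ k - b ^+ k| <= k%:R * e].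
Proof.
move=> ha hb hab; elim: k => [|k [h1 h2 h3]].
  by rewrite !expr0 normr1 subrr normr0 mul0r.
split.
- by rewrite exprS normrM mulr_ile1.
- by rewrite exprS normrM mulr_ile1.
rewrite !exprS.
apply: (le_trans (prod_step ha hb h1 h2)).
by rewrite -nat1r mulrDl mul1r lerD.
Qed.

Lemma prod_bound (R : realFieldType) n (z w : 'I_n -> R) (m : 'I_n -> nat) e :
  (forall j, `|z j| <= 1) -> (forall j, `|w j| <= 1) ->
  (forall j, `|z j - w j| <= e) ->
  `|\prod_j z j ^+ m j - \prod_j w j ^+ m j| <= (\sum_j (m j)%N)%:R * e.
Proof.
move=> hz hw hzw.
rewrite natr_sum mulr_suml.
pose K (A B : R) (C : R) := [/\ `|A| <= 1, `|B| <= 1 & `|A - B| <= C].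
suff : K (\prod_j z j ^+ m j) (\prod_j w j ^+ m j) (\sum_j (m j)%:R * e) by case.
apply: (@big_ind3 _ _ _ K).
- by split; rewrite ?normr1 ?subrr ?normr0.
- move=> A1 B1 C1 A2 B2 C2 [a1 b1 c1] [a2 b2 c2]; split.
  + by rewrite normrM mulr_ile1.
  + by rewrite normrM mulr_ile1.
  apply: (le_trans (prod_step a1 b1 a2 b2)); exact: lerD.
- move=> j _; exact: pow_step.
Qed.

Definition upd (R : Type) n (v : 'I_n -> R) (i : 'I_n) (t : R) : 'I_n -> R :=
  fun j => if j == i then t else v j.

Lemma step_lem (R : realFieldType) n (F : {mpoly R[n]}) v i t s :
  multilinear F ->
  F.@[upd v i t] - F.@[upd v i s] = (t - s) * (F^`M(i)).@[v].
Proof.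
move=> hml; have {}hml : forall m, m \in msupp F -> forall i : 'I_n, (m i <= 1)%N := hml.
have key : forall m, m \in msupp F -> ('X_[m] : {mpoly R[n]}).@[upd v i t]
   - ('X_[m] : {mpoly R[n]}).@[upd v i s] = (t - s) * ('X_[m]^`M(i)).@[v].
  move=> m hm.
  rewrite mderivX mevalZ !mevalX.
  rewrite (bigD1 i) //= (bigD1 i (P := predT)) //= (bigD1 i (P := predT)) //=.
  rewrite /upd eqxx.
  have e1 : \prod_(j < n | j != i) (if j == i then t else v j) ^+ m j
     = \prod_(j < n | j != i) v j ^+ m j.
    by apply: eq_bigr => j /negbTE ->.
  have e2 : \prod_(j < n | j != i) (if j == i then s else v j) ^+ m j
     = \prod_(j < n | j != i) v j ^+ m j.
    by apply: eq_bigr => j /negbTE ->.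
  have e3 : \prod_(j < n | j != i) v j ^+ (m - U_(i))%MM j
     = \prod_(j < n | j != i) v j ^+ m j.
    apply: eq_bigr => j hj; rewrite mnmBE mnm1E eq_sym (negbTE hj) subn0 //.
  rewrite e1 e2 e3 mnmBE mnm1E eqxx.
  have := hml m hm i; case: (m i) => [|[|k]] // _.
    by rewrite !expr0 mul0r !mulr0 subrr.
  by rewrite subnn !expr0 !expr1; ring.
rewrite (mpolyE F).
elim: (msupp F) key => [|m r IH] key.
  by rewrite big_nil mderiv0 !meval0 subrr mulr0.
rewrite big_cons mderivD !mevalD mderivZ !mevalZ.
have -> : F@_m * ('X_[m]).@[upd v i t] + (\sum_(j <- r) F@_j *: 'X_[j]).@[upd v i t] -
  (F@_m * ('X_[m]).@[upd v i s] + (\sum_(j <- r) F@_j *: 'X_[j]).@[upd v i s])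
  = F@_m * (('X_[m]).@[upd v i t] - ('X_[m]).@[upd v i s]) +
    ((\sum_(j <- r) F@_j *: 'X_[j]).@[upd v i t] - (\sum_(j <- r) F@_j *: 'X_[j]).@[upd v i s]) by ring.
rewrite IH; last by move=> m' hm'; apply: key; rewrite inE hm' orbT.
rewrite key ?inE ?eqxx //; ring.
Qed.

Definition Cst (R : realFieldType) n (P : {mpoly R[n]}) : R :=
  \sum_(m <- msupp P) `|P@_m| * (mdeg m)%:R.

Lemma Cst_ge0 (R : realFieldType) n (P : {mpoly R[n]}) : 0 <= Cst P.
Proof. by apply: sumr_ge0 => m _; rewrite mulr_ge0. Qed.

Lemma cont_lem (R : realFieldType) n (P : {mpoly R[n]}) (z w : 'I_n -> R) e :
  (forall j, `|z j| <= 1) -> (forall j, `|w j| <= 1) ->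
  (forall j, `|z j - w j| <= e) ->
  `|P.@[z] - P.@[w]| <= Cst P * e.
Proof.
move=> hz hw hzw.
rewrite !mevalE -sumrB /Cst mulr_suml.
apply: le_trans (ler_norm_sum _ _ _) _.
apply: ler_sum => m _.
rewrite -mulrBr normrM -mulrA ler_wpM2l // mdegE.
exact: prod_bound.
Qed.

Lemma minpos (R : realFieldType) n (f : 'I_n -> R) :
  (forall i, 0 < f i) -> exists2 e, 0 < e & forall i, e <= f i.
Proof.
move=> hf.
suff [e he1 he2] : exists2 e, 0 < e & forall i, i \in enum 'I_n -> e <= f i.
  by exists e => // i; apply: he2; rewrite mem_enum.
elim: (enum 'I_n) => [|a r [e he1 he2]].
  by exists 1.
exists (Num.min e (f a)).
  by rewrite lt_min he1 hf.
move=> i; rewrite inE => /orP [/eqP ->|hi].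
  by rewrite ge_min lexx orbT.
by rewrite ge_min he2.
Qed.

Theorem proposition5 (R : realFieldType) (n : nat) (F : {mpoly R[n]})
  (eta : R) (x : 'I_n -> R) :
  multilinear F -> 0 < eta -> in_cube x ->
  feasible F x ->
  (forall i, grad_map F eta x i = 0) ->
  (forall i, on_bd x i -> partial F i x != 0) ->
  local_min_in F (@in_cube R n) x.
Proof.
move=> hml heta hcube [c hc] hG hnz.
have hp : forall i, x i = Num.min 1 (Num.max (-1) (x i - eta * partial F i x)).
  move=> i; move: (hG i); rewrite /grad_map /proj_cube /grad => /eqP.
  by rewrite mulf_eq0 invr_eq0 (gt_eqF heta) orbF subr_eq0 => /eqP.
have sgn1 : forall i, x i = 1 -> partial F i x < 0.
  move=> i hi; rewrite lt_neqAle hnz ?/on_bd ?hi ?eqxx //=.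
  rewrite leNgt; apply/negP => hpos.
  have := hp i; rewrite hi => h.
  have : Num.min 1 (Num.max (-1) (1 - eta * partial F i x)) < 1.
    rewrite gt_min gt_max; apply/orP; right; apply/andP; split; first lra.
    have : 0 < eta * partial F i x by rewrite mulr_gt0.
    lra.
  by rewrite -h ltxx.
have sgn2 : forall i, x i = -1 -> 0 < partial F i x.
  move=> i hi; rewrite lt_neqAle eq_sym hnz ?/on_bd ?hi ?eqxx ?orbT //=.
  rewrite leNgt; apply/negP => hneg.
  have := hp i; rewrite hi => h.
  have : -1 < Num.min 1 (Num.max (-1) (-1 - eta * partial F i x)).
    rewrite lt_min lt_max; apply/andP; split; first lra.
    apply/orP; right.
    have : eta * partial F i x < 0 by rewrite pmulr_rlt0.
    lra.
  by rewrite -h ltxx.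
pose C i := Cst (F^`M(i)).
have hC : forall i, 0 <= C i by move=> i; apply: Cst_ge0.
pose f i := if on_bd x i then `|partial F i x| / (C i + 1) else 1.
have [e he hef] : exists2 e, 0 < e & forall i, e <= f i.
  apply: minpos => i; rewrite /f; case: ifP => hb //.
  apply: divr_gt0; last by have := hC i; lra.
  by rewrite normr_gt0 hnz.
have hCe : forall i, on_bd x i -> C i * e < `|partial F i x|.
  move=> i hb; have := hef i; rewrite /f hb ler_pdivlMr; last by have := hC i; lra.
  move=> h; have := hC i; nra.
have hfeas : forall v, F.@[fun j => if on_bd x j then x j else v j] = c.
  move=> v; have := congr1 (meval v) hc; rewrite mevalC /fix_bd comp_mpoly_meval => <-.
  apply: meval_eq => j; rewrite tnth_mktuple; case: ifP => _.
    by rewrite mevalC.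
  by rewrite mevalXU.
have hx0 : F.@[x] = c.
  by rewrite -(hfeas x); apply: meval_eq => j; case: ifP.
have hxc : forall j, `|x j| <= 1 by move=> j; rewrite ler_norml; exact: hcube.
exists (e ^+ 2); first by rewrite exprn_gt0.
move=> x' hx' hd.
have hx'c : forall j, `|x' j| <= 1 by move=> j; rewrite ler_norml; exact: hx'.
have hdist : forall j, `|x' j - x j| <= e.
  move=> j; apply: sq_le => //; apply: le_trans hd.
  rewrite /sqdist (bigD1 j) //= -sqrrN opprB lerDl.
  by apply: sumr_ge0 => k _; rewrite sqr_ge0.
pose z k := fun j : 'I_n => if (j < k)%N || ~~ on_bd x j then x' j else x j.
have hz0 : F.@[z 0%N] = c.
  by rewrite -(hfeas x'); apply: meval_eq => j; rewrite /z /=; case: (on_bd x j).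
have hzn : F.@[z n] = F.@[x'].
  by apply: meval_eq => j; rewrite /z ltn_ord.
rewrite -subr_ge0 -hzn hx0 -hz0 -(telescope_sumr (fun k => F.@[z k])) // big_nat.
apply: sumr_ge0 => k /andP [_ hk].
pose i := Ordinal hk.
have hzc : forall j, `|z k j| <= 1.
  by move=> j; rewrite /z; case: ifP.
have hzd : forall j, `|z k j - x j| <= e.
  move=> j; rewrite /z; case: ifP => _ //.
  by rewrite subrr normr0 ltW.
have hsame : forall j, j != i -> z k.+1 j = z k j.
  move=> j hj; rewrite /z ltnS leq_eqVlt.
  have -> : (nat_of_ord j == k) = false.
    by apply/negbTE; apply: contra hj => /eqP hjk; apply/eqP/val_inj.
  by [].
case hb : (on_bd x i); last first.
  have -> : F.@[z k.+1] = F.@[z k].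
    apply: meval_eq => j; case: (eqVneq j i) => [->|hj]; last exact: hsame.
    by rewrite /z hb /= !orbT.
  by rewrite subrr.
have -> : F.@[z k.+1] - F.@[z k] = F.@[upd (z k) i (x' i)] - F.@[upd (z k) i (x i)].
  congr (_ - _); apply: meval_eq => j; rewrite /upd;
    (case: (eqVneq j i) => [->|hj]; last by rewrite ?hsame).
  - by rewrite /z /= ltnSn.
  - by rewrite /z /= ltnn hb.
rewrite step_lem //.
have hD := cont_lem (F^`M(i)) hzc hxc hzd.
rewrite -/(partial F i (z k)) -/(partial F i x) in hD *.
move: hD; rewrite ler_norml => /andP [hD1 hD2].
have hCi := hCe i hb.
rewrite -/(C i) in hD1 hD2.
move: hb; rewrite /on_bd => /orP [/eqP h1|/eqP h1].
- have hg := sgn1 _ h1.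
  rewrite ltr0_norm // in hCi.
  have : x' i <= 1 by case/andP: (hx' i).
  rewrite h1 => hx1.
  apply: mulr_le0; lra.
- have hg := sgn2 _ h1.
  rewrite gtr0_norm // in hCi.
  have : -1 <= x' i by case/andP: (hx' i).
  rewrite h1 => hx1.
  apply: mulr_ge0; lra.
Qed.
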